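(* Let $T$ be a complete theory and $\phi(x,y)$ a formula. The following are equivalent: (1) $\phi(x,y)$ has the order property. (2) There exist a model $M$ of $T$, a tuple $b\in M$, $\sigma\in\mathrm{Aut}(M)$ and $a\in M$ such that, with $U=\phi(M,b)$, $\xi_{\sigma,U}(a)=\bar1\bar0$. (3) The same as (2) with the additional requirement $\sigma\in W_b$. (4) There exist a model $M$ of $T$, a tuple $b\in M$ and $\sigma\in\mathrm{Aut}(M)$ such that, with $U=\phi(M,b)$, for every $n\in\mathbb{N}$ some element of $\xi_{\sigma,U}(M)$ contains $(\bar1\bar0)_n$ as a subsequence. (5) There exist a model $M$ of $T$ and $\sigma\in\mathrm{Aut}(M)$ such that for every $n\in\mathbb{N}$ there is an instance $U_n=\phi(M,b_n)$, $b_n\in M$, such that some element of $\xi_{\sigma,U_n}(M)$ contains $(\bar1\bar0)_n$ as a subsequence. (6) There exist a model $M$ of $T$, a tuple $b\in M$ and $\sigma\in\mathrm{Aut}(M)$ such that, with $U=\phi(M,b)$, the topological closure of $\xi_{\sigma,U}(M)$ in $2^{\mathbb{Z}}$ contains $\bar1\bar0$. (7) There exists a model $M$ of $T$ such that $\bar1\bar0\in\rho_\phi(M)$.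
   Context: $\phi(x,y)$ has the order property if there is a model in which for every $n$ there are $a_1,\dots,a_n$ and $b_1,\dots,b_n$ with $\phi(a_i,b_j)\iff i\le j$. Subsets of $\mathbb{Z}$ are identified with binary $\mathbb{Z}$-sequences; $2^{\mathbb{Z}}$ has the product topology. $\bar1\bar0$ is the sequence $I$ with $I(i)=1$ for $i\le0$ and $I(i)=0$ for $i>0$; $(\bar1\bar0)_n$ is its restriction to coordinates $-n,\dots,n$ (a finite block), and ''contains as a subsequence'' means occurs as a block of consecutive entries. For $\sigma\in\mathrm{Aut}(M)$ and $U\subseteq M$, $\xi_{\sigma,U}(a)=\{n\in\mathbb{Z}:\sigma^n(a)\in U\}$ and $\xi_{\sigma,U}(M)$ is its image. $W_b$ is the set of automorphisms $\sigma$ of $M$ such that $(\sigma^n(b))_{n\in\mathbb{Z}}$ is an indiscernible sequence. $\rho_\phi(M)=\bigcup_b\bigcup_{\sigma\in\mathrm{Aut}(M)}\xi_{\sigma,\phi(M,b)}(M)$. *)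

(* Defs.v *)
From mathcomp Require Import all_boot all_order all_algebra.
Set Implicit Arguments. Unset Strict Implicit. Unset Printing Implicit Defensive.
Import Order.TTheory GRing.Theory Num.Theory.

Record signature := Signature {
  fsym : Type; fari : fsym -> nat;   (* function symbols (constants: arity 0) *)
  rsym : Type; rari : rsym -> nat }.

Section Syntax.
Variable L : signature.

Inductive term : Type :=
| Var : nat -> term
| Fn : forall f : fsym L, ('I_(fari f) -> term) -> term.

Inductive formula : Type :=
| FEq : term -> term -> formula
| FRel : forall r : rsym L, ('I_(rari r) -> term) -> formula
| FNot : formula -> formula
| FAnd : formula -> formula -> formula
| FEx : nat -> formula -> formula.

Fixpoint tfree (t : term) (j : nat) : Prop :=
  match t with
  | Var i => i = j
  | Fn f ts => exists i, tfree (ts i) j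
  end.

Fixpoint ffree (p : formula) (j : nat) : Prop :=
  match p with
  | FEq t1 t2 => tfree t1 j \/ tfree t2 j
  | FRel r ts => exists i, tfree (ts i) j
  | FNot q => ffree q j
  | FAnd q1 q2 => ffree q1 j \/ ffree q2 j
  | FEx i q => j <> i /\ ffree q j
  end.

Definition sentence (p : formula) : Prop := forall j, ~ ffree p j.
End Syntax.

Record structure (L : signature) := Structure {
  carrier :> Type;
  nonempty : inhabited carrier;
  fint : forall f : fsym L, ('I_(fari f) -> carrier) -> carrier;
  rint : forall r : rsym L, ('I_(rari r) -> carrier) -> Prop }.

Section Semantics.
Variables (L : signature) (M : structure L).

Fixpoint eval (v : nat -> M) (t : term L) : M :=
  match t with
  | Var i => v i
  | Fn f ts => @fint L M f (fun i => eval v (ts i))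
  end.

Definition upd (v : nat -> M) (i : nat) (m : M) : nat -> M :=
  fun j => if j == i then m else v j.

Fixpoint sat (v : nat -> M) (p : formula L) : Prop :=
  match p with
  | FEq t1 t2 => eval v t1 = eval v t2
  | FRel r ts => @rint L M r (fun i => eval v (ts i))
  | FNot q => ~ sat v q
  | FAnd q1 q2 => sat v q1 /\ sat v q2
  | FEx i q => exists m : M, sat (upd v i m) q
  end.

(* M |= p[e_0, ..., e_(len-1)]; used only for p whose free variables are < len *)
Definition holds (p : formula L) (len : nat) (e : nat -> M) : Prop :=
  forall v : nat -> M, (forall j, j < len -> v j = e j) -> sat v p.
End Semantics.
Arguments eval {L} M v t.
Arguments sat {L} M v p.
Arguments holds {L} M p len e.
Arguments upd {L} M v i m.

Definition models (L : signature) (M : structure L) (T : formula L -> Prop) : Prop :=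
  forall p, T p -> forall v, sat M v p.

Definition complete_theory (L : signature) (T : formula L -> Prop) : Prop :=
  (forall p, T p -> sentence p) /\
  (exists M : structure L, models M T) /\
  (forall p, sentence p ->
     (forall M : structure L, models M T -> forall v, sat M v p) \/
     (forall M : structure L, models M T -> forall v, sat M v (FNot p))).

Record aut (L : signature) (M : structure L) := Aut {
  afun : M -> M;
  ainv : M -> M;
  afunK : cancel afun ainv;
  ainvK : cancel ainv afun;
  aut_fn : forall f ms, afun (@fint L M f ms) = @fint L M f (afun \o ms);
  aut_rel : forall r ms, @rint L M r ms <-> @rint L M r (afun \o ms) }.

Definition autpow (L : signature) (M : structure L) (s : aut M) (n : int) : M -> M :=
  match n with
  | Posz k => iter k (afun s)
  | Negz k => iter k.+1 (ainv s)   (* Negz k = -(k+1) *)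
  end.

(* ---------- The formula phi(x,y), |x| = kx, |y| = ky ----------
   Free variables 0..kx-1 are x, kx..kx+ky-1 are y.  Tuples are maps nat -> M
   of which only the first kx (resp. ky) entries are used. *)
Definition env (M : Type) (kx : nat) (a b : nat -> M) : nat -> M :=
  fun j => if j < kx then a j else b (j - kx).

Definition phi_holds (L : signature) (M : structure L) (phi : formula L)
  (kx ky : nat) (a b : nat -> M) : Prop :=
  holds M phi (kx + ky) (env kx a b).

Arguments phi_holds {L} M phi kx ky a b.

Definition inst (L : signature) (M : structure L) (phi : formula L)
  (kx ky : nat) (b : nat -> M) : (nat -> M) -> Prop :=
  fun a => @phi_holds L M phi kx ky a b.

Arguments inst {L} M phi kx ky b _.

Definition order_property (L : signature) (T : formula L -> Prop)
  (phi : formula L) (kx ky : nat) : Prop :=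
  exists M : structure L, models M T /\
    forall n : nat, exists a b : nat -> nat -> M,
      forall i j, i < n -> j < n -> (@phi_holds L M phi kx ky (a i) (b j) <-> i <= j).

(* ---------- Binary Z-sequences = subsets of Z ---------- *)
Local Open Scope ring_scope.

Definition xi (L : signature) (M : structure L) (s : aut M)
  (U : (nat -> M) -> Prop) (a : nat -> M) : int -> Prop :=
  fun n => U (autpow s n \o a).

Definition xiM (L : signature) (M : structure L) (s : aut M)
  (U : (nat -> M) -> Prop) : (int -> Prop) -> Prop :=
  fun J => exists a : nat -> M, J = xi s U a.

Definition I10 : int -> Prop := fun i => i <= 0.

(* J contains (\bar1\bar0)_n (coordinates -n..n) as a block of consecutive entries *)
Definition contains_block (J : int -> Prop) (n : nat) : Prop :=
  exists k : int, forall i : int, - (n%:Z) <= i <= n%:Z -> (J (k + i) <-> I10 i).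

(* closure in the product topology of 2^Z (basic neighbourhoods fix finitely
   many coordinates, w.l.o.g. the coordinates in [-N, N]) *)
Definition in_closure (S : (int -> Prop) -> Prop) (I : int -> Prop) : Prop :=
  forall N : nat, exists J, S J /\ forall n : int, `|n| <= N%:Z -> (J n <-> I n).

Definition indiscernible (L : signature) (M : structure L) (ky : nat)
  (s : int -> nat -> M) : Prop :=
  forall (psi : formula L) (k : nat) (i j : nat -> int),
    (forall v, ffree psi v -> (v < k * ky)%N) ->
    (forall m, (m.+1 < k)%N -> i m < i m.+1) ->
    (forall m, (m.+1 < k)%N -> j m < j m.+1) ->
    (holds M psi (k * ky) (fun v => s (i (v %/ ky)%N) (v %% ky)%N) <->
     holds M psi (k * ky) (fun v => s (j (v %/ ky)%N) (v %% ky)%N)).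

Definition inW (L : signature) (M : structure L) (ky : nat) (b : nat -> M)
  (s : aut M) : Prop :=
  indiscernible ky (fun n => autpow s n \o b).

Definition rho (L : signature) (M : structure L) (phi : formula L) (kx ky : nat)
  : (int -> Prop) -> Prop :=
  fun J => exists (b : nat -> M) (s : aut M), xiM s (inst M phi kx ky b) J.
Arguments rho {L} M phi kx ky.

(* Main.v *)
Require Import Defs.
From mathcomp Require Import all_boot all_order all_algebra.
From mathcomp Require Import zify.
From mathcomp Require boolp classical_sets filter.
From Stdlib Require Import Classical FunctionalExtensionality PropExtensionality.
From Stdlib Require Import ClassicalEpsilon ProofIrrelevance.
Import Defs.
Set Implicit Arguments. Unset Strict Implicit. Unset Printing Implicit Defensive.
Import Order.TTheory GRing.Theory Num.Theory.

Module PartA.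

Record UF (U : (nat -> Prop) -> Prop) : Prop := {
  uT : U (fun _ => True);
  uI : forall A B, U A -> U B -> U (fun n => A n /\ B n);
  uS : forall (A B : nat -> Prop), (forall n, A n -> B n) -> U A -> U B;
  u0 : ~ U (fun _ => False);
  uC : forall A, U A \/ U (fun n => ~ A n);
  unp : forall m, U (fun n => (m < n)%N) }.

Definition I := option int.
Definition updx (x : I -> nat) (c : I) (n : nat) : I -> nat :=
  fun d => if d == c then n else x d.
Definition resp (P : pred I) (A : (I -> nat) -> Prop) :=
  forall x y, (forall c, P c -> x c = y c) -> (A x <-> A y).

Section Measure.
Variable U : (nat -> Prop) -> Prop.
Hypothesis HU : UF U.

Lemma U_ext A B : (forall n, A n <-> B n) -> (U A <-> U B).
Proof. by move=> h; split; apply: (uS HU) => n /h. Qed.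

Lemma U_const (P : Prop) : U (fun _ => P) <-> P.
Proof.
split=> [h|p]; last by apply: (uS HU) (uT HU).
by apply: NNPP => np; apply: (u0 HU); apply: (uS HU) h.
Qed.

Lemma U_and A B : U (fun n => A n /\ B n) <-> U A /\ U B.
Proof.
split=> [h|[]]; last exact: (uI HU).
by split; apply: (uS HU) h => n [].
Qed.

Lemma U_not A : U (fun n => ~ A n) <-> ~ U A.
Proof.
split=> [h ha|h]; last by case: (uC HU A).
by apply: (u0 HU); apply: (uS HU) (uI HU ha h) => n [].
Qed.

Fixpoint Q (s : seq I) (A : (I -> nat) -> Prop) (x : I -> nat) : Prop :=
  match s with
  | [::] => A x
  | c :: s' => U (fun n => Q s' A (updx x c n))
  end.

Lemma Q_ext s A B x :
  (forall y, (forall c, c \notin s -> y c = x c) -> (A y <-> B y)) ->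
  (Q s A x <-> Q s B x).
Proof.
elim: s x => [|c s IH] x h /=; first by apply: h.
apply: U_ext => n; apply: IH => y hy; apply: h => d.
rewrite in_cons negb_or => /andP [dc ds].
by rewrite hy // /updx (negbTE dc).
Qed.

Lemma Q_ext' s A B x : (forall y, A y <-> B y) -> (Q s A x <-> Q s B x).
Proof. by move=> h; apply: Q_ext. Qed.

Lemma Q_mono s (A B : (I -> nat) -> Prop) x :
  (forall y, A y -> B y) -> Q s A x -> Q s B x.
Proof.
elim: s x => [|c s IH] x h /=; first exact: h.
by apply: (uS HU) => n; apply: IH.
Qed.

Lemma Q_and s A B x : Q s (fun y => A y /\ B y) x <-> Q s A x /\ Q s B x.
Proof.
elim: s x => [|c s IH] x //=.
rewrite -U_and; apply: U_ext => n; exact: IH.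
Qed.

Lemma Q_not s A x : Q s (fun y => ~ A y) x <-> ~ Q s A x.
Proof.
elim: s x => [|c s IH] x //=.
rewrite -U_not; apply: U_ext => n; exact: IH.
Qed.

Lemma Q_const s (P : Prop) x : Q s (fun _ => P) x <-> P.
Proof.
elim: s x => [|c s IH] x //=.
apply: (iff_trans _ (U_const P)); apply: U_ext => n; exact: IH.
Qed.

Lemma Q_resp (P : pred I) s A : resp P A ->
  forall x y, (forall c, P c -> c \notin s -> x c = y c) -> (Q s A x <-> Q s A y).
Proof.
move=> hA x y; elim: s x y => [|c s IH] x y h /=.
  by apply: hA => c Pc; apply: h.
apply: U_ext => n; apply: IH => d Pd ds; rewrite /updx.
case: eqP => // /eqP dc; apply: h => //.
by rewrite in_cons negb_or dc.
Qed.

Lemma Q_filter (P : pred I) s A x : resp P A -> (Q s A x <-> Q (filter P s) A x).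
Proof.
move=> hA; elim: s x => [|c s IH] x //=.
case: ifP => Pc /=.
  by apply: U_ext => n; apply: IH.
apply: (iff_trans _ (U_const (Q (filter P s) A x))); apply: U_ext => n.
rewrite IH; apply: (Q_resp hA) => d Pd _; rewrite /updx.
by case: eqP => // dc; rewrite dc Pc in Pd.
Qed.

Lemma Q_ren s s' (C : seq nat -> Prop) x x' :
  uniq s -> uniq s' -> size s = size s' ->
  (Q s (fun y => C (map y s)) x <-> Q s' (fun y => C (map y s')) x').
Proof.
elim: s s' C x x' => [|c s IH] [|c' s'] C x x' //= /andP [cs us] /andP [cs' us'] [sz].
apply: U_ext => n.
rewrite (@Q_ext s _ (fun y => C (n :: map y s))); last first.
  by move=> y hy; rewrite hy /updx ?eqxx.
rewrite (@Q_ext s' (fun y => C (y c' :: map y s')) (fun y => C (n :: map y s'))); last first.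
  by move=> y hy; rewrite hy /updx ?eqxx.
exact: (IH s' (fun l => C (n :: l))).
Qed.

Definition fill (s : seq I) (l : seq nat) : I -> nat := fun c => nth 0%N l (index c s).

Lemma fill_map s y c : c \in s -> fill s (map y s) c = y c.
Proof.
move=> cs; rewrite /fill (nth_map c) ?index_mem // nth_index //.
Qed.

Lemma resp_fill s A y : resp (mem s) A -> (A y <-> A (fill s (map y s))).
Proof. by move=> h; apply: h => c cs; rewrite fill_map. Qed.

End Measure.

Lemma UF_exists : exists U, UF U.
Proof.
have [G [GU sFG]] := filter.ultraFilterLemma (filter.eventually_filter).
exists G; split.
- exact: (@filter.filterT _ G).
- move=> A B GA GB; exact: (@filter.filterI _ G _ A B GA GB).
- move=> A B AB GA; exact: (@filter.filterS _ G _ A B AB GA).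
- exact: (@filter.filter_not_empty _ G _).
- move=> A; exact: (filter.in_ultra_setVsetC A GU).
- move=> m; apply: sFG; exists m.+1 => //.
Qed.

End PartA.
Import PartA.

Module PartB.
Local Open Scope ring_scope.

Definition ltI (a b : I) : bool :=
  match a, b with
  | Some i, Some j => i < j
  | Some _, None => true
  | None, _ => false
  end.

Lemma ltI_trans : transitive ltI.
Proof. by move=> [b|] [a|] [c|] //=; apply: lt_trans. Qed.

Lemma ltI_irr : irreflexive ltI.
Proof. by move=> [a|] //=; rewrite ltxx. Qed.

Definition win (N : nat) : seq int := [seq (k%:Z - N%:Z) | k <- iota 0 (N.*2.+1)].
Definition Lwin (N : nat) : seq I := map Some (win N) ++ [:: None].

Lemma mem_win N a : (a \in win N) = (- (N%:Z) <= a <= N%:Z).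
Proof.
apply/mapP/idP => [[k]|h].
  rewrite mem_iota => /andP [_ hk] ->; apply/andP; split; lia.
exists (absz (a + N%:Z)); first by rewrite mem_iota; apply/andP; split; lia.
lia.
Qed.

Lemma mem_Lwin_Some N a : (Some a \in Lwin N) = (- (N%:Z) <= a <= N%:Z).
Proof.
rewrite /Lwin mem_cat mem_seq1 orbF -mem_win.
apply/idP/idP => [|h]; last exact: map_f.
by case/mapP => b hb [->].
Qed.

Lemma mem_Lwin_None N : None \in Lwin N.
Proof. by rewrite /Lwin mem_cat mem_seq1 eqxx orbT. Qed.

Lemma sorted_SomeNone (w : seq int) : sorted <%R w -> sorted ltI (map Some w ++ [:: None]).
Proof.
elim: w => //= a w IH; case: w IH => //= b w IH /andP [ab hw].
by rewrite ab; apply: IH.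
Qed.

Lemma sorted_win N : sorted <%R (win N).
Proof.
rewrite /win; apply: (homo_sorted (e := ltn)); last exact: iota_ltn_sorted.
move=> x y /= h; lia.
Qed.

Lemma sorted_Lwin N : sorted ltI (Lwin N).
Proof. exact/sorted_SomeNone/sorted_win. Qed.

Lemma Lwin_sub N M : (N <= M)%N -> {subset Lwin N <= Lwin M}.
Proof.
move=> NM [a|]; last by move=> _; exact: mem_Lwin_None.
rewrite !mem_Lwin_Some => /andP [h1 h2]; apply/andP; split; move: NM; lia.
Qed.

Lemma filter_sorted_sub (s l : seq I) :
  sorted ltI s -> sorted ltI l -> {subset s <= l} -> filter (mem s) l = s.
Proof.
move=> ss sl sub; apply: (irr_sorted_eq ltI_trans ltI_irr).
- exact: sorted_filter ltI_trans _ _ sl.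
- exact: ss.
move=> c; rewrite mem_filter /=; apply/andP/idP => [[]//|cs]; split => //.
exact: sub.
Qed.

Definition x0 : I -> nat := fun _ => 0%N.

Section Large.
Variable U : (nat -> Prop) -> Prop.
Hypothesis HU : UF U.

Definition large (A : (I -> nat) -> Prop) : Prop :=
  exists N B, resp (mem (Lwin N)) B /\ Q U (Lwin N) B x0 /\ forall x, B x -> A x.

Lemma resp_sub (P P' : pred I) A : (forall c, P c -> P' c) -> resp P A -> resp P' A.
Proof. by move=> h hA x y e; apply: hA => c /h; apply: e. Qed.

Lemma Q_sorted_sub s N A :
  resp (mem s) A -> sorted ltI s -> {subset s <= Lwin N} ->
  (Q U (Lwin N) A x0 <-> Q U s A x0).
Proof.
move=> hA ss sub; rewrite (Q_filter HU _ _ hA).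
by rewrite filter_sorted_sub //; apply: sorted_Lwin.
Qed.

Lemma largeP s A N :
  resp (mem s) A -> sorted ltI s -> {subset s <= Lwin N} -> (large A <-> Q U s A x0).
Proof.
move=> hA ss sub; split.
  move=> [N' [B [hB [QB BA]]]].
  have sub1 := Lwin_sub (leq_maxl N N'); have sub2 := Lwin_sub (leq_maxr N N').
  rewrite -(@Q_sorted_sub s (maxn N N')) //; last by move=> c /sub /sub1.
  apply: (Q_mono HU BA).
  rewrite (@Q_sorted_sub (Lwin N')) //; exact: sorted_Lwin.
move=> h; exists N, A; split; first exact: resp_sub hA.
by split => //; rewrite (@Q_sorted_sub s).
Qed.

Lemma largeW N A : resp (mem (Lwin N)) A -> (large A <-> Q U (Lwin N) A x0).
Proof. move=> h; exact: (largeP h (sorted_Lwin N) (fun c hc => hc)). Qed.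

Lemma large_T : large (fun _ => True).
Proof.
exists 0%N, (fun _ => True); split; first by [].
by split => //; apply/(Q_const HU).
Qed.

Lemma large_mono (A B : (I -> nat) -> Prop) : (forall x, A x -> B x) -> large A -> large B.
Proof.
move=> AB [N [C [h1 [h2 h3]]]]; exists N, C; split => //; split => // x /h3; exact: AB.
Qed.

Lemma large_and A B : large A -> large B -> large (fun x => A x /\ B x).
Proof.
move=> [N [C [hC [QC CA]]]] [N' [D [hD [QD DB]]]].
exists (maxn N N'), (fun x => C x /\ D x); split.
  move=> x y e.
  have e1 : forall c, c \in Lwin N -> x c = y c.
    by move=> c hc; apply: e; apply: Lwin_sub (leq_maxl _ _) _ hc.
  have e2 : forall c, c \in Lwin N' -> x c = y c.
    by move=> c hc; apply: e; apply: Lwin_sub (leq_maxr _ _) _ hc.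
  by rewrite (hC x y e1) (hD x y e2).
split; last by move=> x [/CA ? /DB ?].
apply/(Q_and HU); split.
  rewrite (@Q_sorted_sub (Lwin N)) //; first exact: sorted_Lwin.
  exact: Lwin_sub (leq_maxl _ _).
rewrite (@Q_sorted_sub (Lwin N')) //; first exact: sorted_Lwin.
exact: Lwin_sub (leq_maxr _ _).
Qed.

Lemma large_F : ~ large (fun _ => False).
Proof.
move=> [N [B [_ [QB BF]]]].
have := Q_mono HU BF QB; exact/(Q_const HU).
Qed.

Lemma large_C N A : resp (mem (Lwin N)) A -> large A \/ large (fun x => ~ A x).
Proof.
move=> hA; rewrite (largeW hA) largeW; last first.
  by move=> x y e; split => h1 h2; apply: h1; apply/(hA x y e).
rewrite (Q_not HU); exact: classic.
Qed.

Definition shI (d : int) (c : I) : I :=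
  match c with Some i => Some (i + d) | None => None end.
Definition sh (d : int) (x : I -> nat) : I -> nat := fun c => x (shI d c).

Lemma shI_inj d : injective (shI d).
Proof. by move=> [a|] [b|] //= [] /addIr ->. Qed.

Lemma large_sh d A : large A -> large (fun x => A (sh d x)).
Proof.
move=> [N [B [hB [QB BA]]]].
apply: (large_mono (A := fun x => B (sh d x))); first by move=> x /BA.
pose s := map (shI d) (Lwin N).
have hBs : resp (mem s) (fun x => B (sh d x)).
  move=> x y e; apply: hB => c cL; rewrite /sh; apply: e; exact: map_f.
have ss : sorted ltI s.
  rewrite /s; apply: (homo_sorted (e := ltI)); last exact: sorted_Lwin.
  by move=> [a|] [b|] //= ab; rewrite ltrD2r.
have sub : {subset s <= Lwin (N + absz d)}.
  move=> c /mapP [[a|] aL ->] /=; last exact: mem_Lwin_None.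
  move: aL; rewrite !mem_Lwin_Some => /andP [h1 h2]; apply/andP; split; lia.
rewrite (largeP hBs ss sub).
have uL : uniq (Lwin N) := sorted_uniq ltI_trans ltI_irr (sorted_Lwin N).
pose C := fun l => B (fill (Lwin N) l).
rewrite (@Q_ext' _ HU s _ (fun y => C (map y s))); last first.
  move=> y; rewrite /C /s -map_comp; exact: (resp_fill (sh d y) hB).
rewrite (@Q_ren _ HU s (Lwin N) C x0 x0) //; last by rewrite size_map.
  rewrite (Q_ext' HU _ (B := B)) // => y; rewrite /C; exact: iff_sym (resp_fill y hB).
by rewrite map_inj_uniq //; apply: shI_inj.
Qed.

Lemma sh_sh d e x : sh d (sh e x) = sh (d + e) x.
Proof.
by apply: functional_extensionality => [[a|]] //; rewrite /sh /= addrA.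
Qed.

Lemma sh0 x : sh 0 x = x.
Proof. by apply: functional_extensionality => [[a|]] //; rewrite /sh /= addr0. Qed.

Lemma large_shE d A : large (fun x => A (sh d x)) <-> large A.
Proof.
split; last exact: large_sh.
move=> /(large_sh (- d)); apply: large_mono => x.
by rewrite sh_sh subrr sh0.
Qed.

End Large.

End PartB.
Import PartB.

Module PartC.

Section Generic.
Variables (L : signature) (M : structure L).

Lemma eval_coinc (t : term L) (v w : nat -> M) :
  (forall j, tfree t j -> v j = w j) -> eval M v t = eval M w t.
Proof.
elim: t => [i|f ts IH] h /=; first by apply: h.
congr fint; apply: functional_extensionality => i; apply: IH => j hj.
by apply: h; exists i.
Qed.

Lemma sat_coinc (p : formula L) (v w : nat -> M) :
  (forall j, ffree p j -> v j = w j) -> (sat M v p <-> sat M w p).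
Proof.
elim: p v w => [t1 t2|r ts|q IH|q1 IH1 q2 IH2|i q IH] v w h /=.
- rewrite (@eval_coinc t1 v w) ?(@eval_coinc t2 v w) // => j hj; apply: h; by [right|left].
- have -> : (fun i => eval M v (ts i)) = (fun i => eval M w (ts i)) => //.
  apply: functional_extensionality => i; apply: eval_coinc => j hj; apply: h; by exists i.
- by rewrite (IH v w h).
- rewrite (IH1 v w) ?(IH2 v w) // => j hj; apply: h; by [right|left].
- have E : forall m, sat M (upd M v i m) q <-> sat M (upd M w i m) q.
    move=> m; apply: IH => j hj; rewrite /upd; case: eqP => // ji; apply: h; by split.
  by split=> [][m hm]; exists m; apply/E.
Qed.

Lemma term_bound (t : term L) : exists K, forall j, tfree t j -> (j < K)%N.
Proof.
elim: t => [i|f ts IH]; first by exists i.+1 => j /= ->.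
have [g hg] := fin_all_exists IH.
exists (\max_(i < fari f) g i) => j [i hi].
apply: leq_trans (hg i j hi) _; exact: leq_bigmax.
Qed.

Lemma formula_bound (p : formula L) : exists K, forall j, ffree p j -> (j < K)%N.
Proof.
elim: p => [t1 t2|r ts|q IH|q1 IH1 q2 IH2|i q IH].
- have [K1 h1] := term_bound t1; have [K2 h2] := term_bound t2.
  exists (maxn K1 K2) => j [/h1|/h2] hj; rewrite leq_max hj ?orbT //.
- have [g hg] := fin_all_exists (fun i => term_bound (ts i)).
  exists (\max_(i < rari r) g i) => j [i hi].
  apply: leq_trans (hg i j hi) _; exact: leq_bigmax.
- exact: IH.
- have [K1 h1] := IH1; have [K2 h2] := IH2.
  exists (maxn K1 K2) => j [/h1|/h2] hj; rewrite leq_max hj ?orbT //.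
- have [K h] := IH; exists K => j [_ /h] //.
Qed.

Lemma holds_sat (p : formula L) len (e : nat -> M) :
  (forall j, ffree p j -> (j < len)%N) -> (holds M p len e <-> sat M e p).
Proof.
move=> hb; split=> [h|h v hv]; first by apply: h.
apply/(sat_coinc (w := e)) => // j /hb; exact: hv.
Qed.

Definition pres (g : M -> M) :=
  [/\ (forall f ms, g (@fint L M f ms) = @fint L M f (g \o ms)),
      (forall r ms, @rint L M r ms <-> @rint L M r (g \o ms)) &
      exists h, cancel g h /\ cancel h g].

Lemma eval_pres g (t : term L) v : pres g -> eval M (g \o v) t = g (eval M v t).
Proof.
case=> hf _ _; elim: t => [i|f ts IH] //=.
rewrite hf; congr fint; apply: functional_extensionality => i /=; exact: IH.
Qed.

Lemma sat_pres g (p : formula L) : pres g -> forall v, sat M (g \o v) p <-> sat M v p.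
Proof.
move=> hg; have [hf hr [h [gh hg']]] := hg.
have ginj : injective g := can_inj gh.
elim: p => [t1 t2|r ts|q IH|q1 IH1 q2 IH2|i q IH] v /=.
- rewrite !eval_pres //; split => [/ginj|->] //.
- have -> : (fun i => eval M (g \o v) (ts i)) = g \o (fun i => eval M v (ts i)).
    by apply: functional_extensionality => i; rewrite eval_pres.
  by rewrite -hr.
- by rewrite IH.
- by rewrite IH1 IH2.
- split=> [][m hm].
    exists (h m); apply/IH; move: hm; congr (sat M _ q).
    by apply: functional_extensionality => j; rewrite /upd /comp; case: eqP => //; rewrite hg'.
  exists (g m); have -> : upd M (g \o v) i (g m) = g \o upd M v i m.
    by apply: functional_extensionality => j; rewrite /upd /comp; case: eqP.
  by apply/IH.
Qed.

Lemma pres_comp g1 g2 : pres g1 -> pres g2 -> pres (g1 \o g2).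
Proof.
move=> [f1 r1 [h1 [c1 c1']]] [f2 r2 [h2 [c2 c2']]]; split.
- by move=> f ms /=; rewrite f2 f1.
- by move=> r ms; rewrite (r2 r ms) (r1 r).
- exists (h2 \o h1); split=> x /=; by rewrite ?c1 ?c2 ?c2' ?c1'.
Qed.

Lemma pres_id : pres id.
Proof. by split => //; exists id. Qed.

Lemma pres_iter g k : pres g -> pres (iter k g).
Proof.
move=> hg; elim: k => [|k IH]; first exact: pres_id.
have -> : iter k.+1 g = g \o iter k g by [].
exact: pres_comp.
Qed.

Lemma pres_afun (s : aut M) : pres (afun s).
Proof. split; [exact: aut_fn|exact: aut_rel|exists (ainv s); split; [exact: afunK|exact: ainvK]]. Qed.

Lemma pres_ainv (s : aut M) : pres (ainv s).
Proof.
split.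
- move=> f ms; apply: (can_inj (afunK s)); rewrite ainvK aut_fn; congr fint.
  by apply: functional_extensionality => i /=; rewrite ainvK.
- move=> r ms; rewrite (aut_rel s (ainv s \o ms)).
  have -> // : afun s \o (ainv s \o ms) = ms.
  by apply: functional_extensionality => i /=; rewrite ainvK.
- exists (afun s); split; [exact: ainvK|exact: afunK].
Qed.

Lemma pres_autpow (s : aut M) n : pres (autpow s n).
Proof. case: n => k /=; apply: pres_iter; [exact: pres_afun|exact: pres_ainv]. Qed.

Lemma autpowS (s : aut M) (n : int) x : autpow s (n + 1) x = afun s (autpow s n x).
Proof.
case: n => [k|[|k]].
- have -> : (Posz k + 1 = Posz k.+1)%R by lia.
  by [].
- have -> : (Negz 0 + 1 = Posz 0)%R by lia.
  by rewrite /= ainvK.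
- have -> : (Negz k.+1 + 1 = Negz k)%R by lia.
  by rewrite /= ainvK.
Qed.

Lemma autpowP (s : aut M) (n : int) x : autpow s (n - 1) x = ainv s (autpow s n x).
Proof.
apply: (can_inj (afunK s)); rewrite ainvK -autpowS.
by rewrite GRing.subrK.
Qed.

Lemma autpowD (s : aut M) (m n : int) x :
  autpow s m (autpow s n x) = autpow s (m + n) x.
Proof.
case: m => k.
  elim: k => [|k IH] /=; first by rewrite add0r.
  rewrite /= in IH; rewrite IH -autpowS; congr autpow; lia.
elim: k => [|k IH] /=.
  by rewrite -autpowP; congr autpow; lia.
rewrite /= in IH; rewrite IH -autpowP; congr autpow; lia.
Qed.

Lemma autpow0 (s : aut M) x : autpow s 0 x = x.
Proof. by []. Qed.

End Generic.

End PartC.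
Import PartC.

Module PartD.
Local Open Scope ring_scope.

Section Easy.
Variables (L : signature) (phi : formula L) (kx ky : nat).
Hypothesis hphi : forall v, ffree phi v -> (v < kx + ky)%N.

Lemma env_comp (M : Type) (g : M -> M) (a b : nat -> M) :
  env kx (g \o a) (g \o b) = g \o env kx a b.
Proof. by apply: functional_extensionality => j; rewrite /env /comp; case: ifP. Qed.

Lemma phi_pres (M : structure L) g a b : pres g ->
  (phi_holds M phi kx ky (g \o a) (g \o b) <-> phi_holds M phi kx ky a b).
Proof.
move=> hg; rewrite /phi_holds env_comp !holds_sat //; exact: sat_pres.
Qed.

Lemma xi_key (M : structure L) (s : aut M) a b (i j : int) :
  phi_holds M phi kx ky (autpow s i \o a) (autpow s j \o b) <->
  xi s (inst M phi kx ky b) a (i - j).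
Proof.
rewrite /xi /inst -[X in _ <-> X](phi_pres _ _ (pres_autpow s j)).
have -> // : autpow s j \o (autpow s (i - j) \o a) = autpow s i \o a.
apply: functional_extensionality => k /=; rewrite autpowD; congr autpow; lia.
Qed.

Lemma block_op (M : structure L) (s : aut M) a b (n : nat) (k : int) :
  (forall i : int, - (n%:Z) <= i <= n%:Z -> (xi s (inst M phi kx ky b) a (k + i) <-> I10 i)) ->
  exists A B : nat -> nat -> M,
      forall i j, (i < n)%N -> (j < n)%N -> (phi_holds M phi kx ky (A i) (B j) <-> (i <= j)%N).
Proof.
move=> h; exists (fun i => autpow s (k + i%:Z) \o a), (fun j => autpow s j%:Z \o b) => i j hi hj.
rewrite xi_key.
have -> : k + i%:Z - j%:Z = k + (i%:Z - j%:Z) by lia.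
rewrite h; last by apply/andP; split; lia.
rewrite /I10; split; lia.
Qed.

End Easy.

End PartD.
Import PartD.

Module PartE.

Definition respF (T : Type) (l : seq I) (F : (I -> nat) -> T) :=
  forall x y, (forall c, c \in l -> x c = y c) -> F x = F y.

Lemma respF_sub T N N' (F : (I -> nat) -> T) : (N <= N')%N -> respF (Lwin N) F -> respF (Lwin N') F.
Proof. by move=> h hF x y e; apply: hF => c /(Lwin_sub h); apply: e. Qed.

Section Ultra.
Variables (L : signature) (M0 : structure L).
Variable U : (nat -> Prop) -> Prop.
Hypothesis HU : UF U.

Notation large := (large U).

Lemma large_mp (A B : (I -> nat) -> Prop) : large A -> (forall x, A x -> B x) -> large B.
Proof. by move=> h AB; apply: large_mono AB h. Qed.

Lemma large_all k (A : nat -> (I -> nat) -> Prop) :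
  (forall j, (j < k)%N -> large (A j)) -> large (fun x => forall j, (j < k)%N -> A j x).
Proof.
elim: k => [|k IH] h.
  by apply: (large_mono (A := fun _ => True)); [|exact: (large_T HU)].
apply: (large_mono (A := fun x => (forall j, (j < k)%N -> A j x) /\ A k x)).
  move=> x [h1 h2] j; rewrite ltnS leq_eqVlt => /orP [/eqP -> //|]; exact: h1.
apply: (large_and HU); last exact: h.
by apply: IH => j hj; apply: h; apply: ltnW.
Qed.

Lemma large_ord n (A : 'I_n -> (I -> nat) -> Prop) :
  (forall i, large (A i)) -> large (fun x => forall i, A i x).
Proof.
move=> h.
have H : large (fun x => forall j, (j < n)%N -> forall i : 'I_n, val i = j -> A i x).
  apply: large_all => j hj.
  apply: (large_mono (A := A (Ordinal hj))); last exact: h.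
  by move=> x hx i hi; have -> : i = Ordinal hj by apply: val_inj.
apply: (large_mp H) => x hx i; exact: (hx i (ltn_ord i) i erefl).
Qed.

Definition Raw := { p : nat * ((I -> nat) -> M0) | respF (Lwin p.1) p.2 }.
Definition rf (r : Raw) := (proj1_sig r).2.
Definition rw (r : Raw) := (proj1_sig r).1.
Lemma rfP (r : Raw) : respF (Lwin (rw r)) (rf r).
Proof. exact: (proj2_sig r). Qed.

Definition eqae (r r' : Raw) := large (fun x => rf r x = rf r' x).

Lemma eqae_refl r : eqae r r.
Proof. by apply: (large_mono (A := fun _ => True)); [|exact: (large_T HU)]. Qed.

Lemma eqae_sym r r' : eqae r r' -> eqae r' r.
Proof. by apply: large_mono. Qed.

Lemma eqae_trans r1 r2 r3 : eqae r1 r2 -> eqae r2 r3 -> eqae r1 r3.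
Proof. by move=> h1 h2; apply: (large_mp (large_and HU h1 h2)) => x [-> ->]. Qed.

Definition canon (r : Raw) : Raw := epsilon (inhabits r) (fun r' => eqae r' r).

Lemma canon_spec r : eqae (canon r) r.
Proof. by apply: (epsilon_spec (inhabits r) (fun r0 => eqae r0 r)); exists r; apply: eqae_refl. Qed.

Lemma canon_eq r r' : eqae r r' -> canon r = canon r'.
Proof.
move=> h; rewrite /canon.
have -> : (fun r0 => eqae r0 r) = (fun r0 => eqae r0 r').
  apply: functional_extensionality => r0; apply: propositional_extensionality.
  split => h0; [exact: eqae_trans h0 h | exact: eqae_trans h0 (eqae_sym h)].
by rewrite (proof_irrelevance _ (inhabits r) (inhabits r')).
Qed.

Definition Car := { r : Raw | canon r = r }.

Definition cl (r : Raw) : Car := exist _ (canon r) (canon_eq (canon_spec r)).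
Definition Ff (q : Car) := rf (proj1_sig q).
Definition Fw (q : Car) := rw (proj1_sig q).

Lemma cl_rep q : cl (proj1_sig q) = q.
Proof. by case: q => r hr; apply: subset_eq_compat. Qed.

Lemma rep_cl r : large (fun x => Ff (cl r) x = rf r x).
Proof. exact: canon_spec. Qed.

Lemma cl_eq r r' : cl r = cl r' <-> eqae r r'.
Proof.
split=> [h|h]; last by apply: subset_eq_compat; apply: canon_eq.
have h' : canon r = canon r' by move: (f_equal (@proj1_sig _ _) h).
apply: eqae_trans (eqae_sym (canon_spec r)) _.
by rewrite h'; apply: canon_spec.
Qed.

Lemma Car_eq (q q' : Car) : q = q' <-> large (fun x => Ff q x = Ff q' x).
Proof. by rewrite -[q]cl_rep -[q']cl_rep cl_eq -/(Ff q) -/(Ff q'); rewrite !cl_rep. Qed.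

Lemma FfP q : respF (Lwin (Fw q)) (Ff q).
Proof. exact: rfP. Qed.

Definition mkRaw N (F : (I -> nat) -> M0) (h : respF (Lwin N) F) : Raw :=
  exist _ (N, F) h.

Definition maxw n (ms : 'I_n -> Car) := \max_(i < n) Fw (ms i).

Lemma maxw_resp n (ms : 'I_n -> Car) i : respF (Lwin (maxw ms)) (Ff (ms i)).
Proof. exact: (respF_sub (leq_bigmax (F := fun i => Fw (ms i)) i) (FfP (q := ms i))). Qed.

Lemma fint_resp f (ms : 'I_(fari f) -> Car) :
  respF (Lwin (maxw ms)) (fun x => @fint L M0 f (fun i => Ff (ms i) x)).
Proof.
move=> x y e; congr fint; apply: functional_extensionality => i.
exact: maxw_resp.
Qed.

Definition fintU (f : fsym L) (ms : 'I_(fari f) -> Car) : Car := cl (mkRaw (fint_resp (ms := ms))).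
Definition rintU (r : rsym L) (ms : 'I_(rari r) -> Car) : Prop :=
  large (fun x => @rint L M0 r (fun i => Ff (ms i) x)).

Lemma Car_inh : inhabited Car.
Proof.
case: (nonempty M0) => m0; constructor; apply: cl.
by apply: (@mkRaw 0 (fun _ => m0)).
Qed.

Definition MU : structure L := @Structure L Car Car_inh fintU rintU.

Definition vx (v : nat -> Car) (x : I -> nat) : nat -> M0 := fun j => Ff (v j) x.

Lemma eval_los (v : nat -> Car) t :
  large (fun x => Ff (eval MU v t) x = eval M0 (vx v x) t).
Proof.
elim: t => [i|f ts IH] /=.
  by apply: (large_mono (A := fun _ => True)); [|exact: (large_T HU)].
apply: (large_mp (large_and HU (rep_cl (mkRaw (fint_resp (ms := fun i => eval MU v (ts i))))) (large_ord IH))) => x [h1 h2].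
rewrite h1 /=; congr fint; apply: functional_extensionality => i; exact: h2.
Qed.

Lemma val_bound (v : nat -> Car) K :
  forall x y, (forall c, c \in Lwin (\max_(j < K) Fw (v j)) -> x c = y c) ->
  forall j, (j < K)%N -> vx v x j = vx v y j.
Proof.
move=> x y e j hj; rewrite /vx.
apply: (respF_sub _ (FfP (q := v j))) e.
exact: (leq_bigmax (Ordinal hj)).
Qed.

Lemma sat_supp (v : nat -> Car) p : exists N, resp (mem (Lwin N)) (fun x => sat M0 (vx v x) p).
Proof.
have [K hK] := formula_bound p.
exists (\max_(j < K) Fw (v j)) => x y e; apply: sat_coinc => j /hK hj.
exact: (val_bound e hj).
Qed.

Lemma vx_upd v i m x : vx (upd MU v i m) x = upd M0 (vx v x) i (Ff m x).
Proof. by apply: functional_extensionality => j; rewrite /vx /upd; case: eqP. Qed.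

Theorem los p (v : nat -> Car) : sat MU v p <-> large (fun x => sat M0 (vx v x) p).
Proof.
elim: p v => [t1 t2|r ts|q IH|q1 IH1 q2 IH2|i q IH] v /=.
- rewrite Car_eq; have h1 := eval_los v t1; have h2 := eval_los v t2.
  split => h.
    by apply: (large_mp (large_and HU h (large_and HU h1 h2))) => x [e [<- <-]].
  by apply: (large_mp (large_and HU h (large_and HU h1 h2))) => x [e [-> ->]].
- have E := large_ord (fun i => eval_los v (ts i)).
  rewrite /rintU; split => h.
    apply: (large_mp (large_and HU h E)) => x [hr he].
    by have <- : (fun i => Ff (eval MU v (ts i)) x) = (fun i => eval M0 (vx v x) (ts i))
      by apply: functional_extensionality => i; exact: he.
  apply: (large_mp (large_and HU h E)) => x [hr he].
  by have -> : (fun i => Ff (eval MU v (ts i)) x) = (fun i => eval M0 (vx v x) (ts i))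
    by apply: functional_extensionality => i; exact: he.
- rewrite IH; have [N hN] := sat_supp v q.
  split => h.
    case: (large_C HU hN) => // h'; exfalso; exact: h.
  move=> h'; apply: (large_F HU); apply: (large_mp (large_and HU h h')) => x [].
  by move=> a b; apply: a.
- rewrite IH1 IH2; split => [[h1 h2]|h]; first exact: (large_and HU).
  by split; apply: (large_mp h) => x [].
- split.
    move=> [m]; rewrite IH; apply: large_mono => x.
    by rewrite vx_upd => h; exists (Ff m x).
  move=> h.
  have [K hK] := formula_bound q.
  pose N := \max_(j < K) Fw (v j).
  have m0 : inhabited M0 := nonempty M0.
  pose P x := fun m0 => sat M0 (upd M0 (vx v x) i m0) q.
  pose G x := epsilon m0 (P x).
  have hG : respF (Lwin N) G.
    move=> x y e; rewrite /G; congr epsilon.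
    apply: functional_extensionality => mm; apply: propositional_extensionality.
    apply: sat_coinc => j /hK hj; rewrite /upd; case: eqP => // _.
    exact: (val_bound e hj).
  exists (cl (mkRaw hG)); rewrite IH.
  apply: (large_mp (large_and HU h (rep_cl (mkRaw hG)))) => x [hx e].
  rewrite vx_upd e /= /G; exact: (epsilon_spec m0 (P x) hx).
Qed.

Lemma models_MU (T : formula L -> Prop) : models M0 T -> models MU T.
Proof.
move=> hM p Tp v; apply/los.
by apply: (large_mono (A := fun _ => True)); [move=> x _; apply: hM|exact: (large_T HU)].
Qed.


Lemma large_iff (A B C : (I -> nat) -> Prop) :
  large A -> (forall x, A x -> (B x <-> C x)) -> (large B <-> large C).
Proof.
move=> hA h; split => hB.
  by apply: (large_mp (large_and HU hA hB)) => x [ax bx]; apply/(h x ax).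
by apply: (large_mp (large_and HU hA hB)) => x [ax bx]; apply/(h x ax).
Qed.

Lemma large_sat_ae (w1 w2 : (I -> nat) -> nat -> M0) p K :
  (forall j, ffree p j -> (j < K)%N) ->
  (forall j, (j < K)%N -> large (fun x => w1 x j = w2 x j)) ->
  (large (fun x => sat M0 (w1 x) p) <-> large (fun x => sat M0 (w2 x) p)).
Proof.
move=> hK h; apply: large_iff (large_all h) _ => x hx.
by apply: sat_coinc => j /hK; apply: hx.
Qed.

Lemma shI_Lwin d N c : c \in Lwin N -> shI d c \in Lwin (N + absz d).
Proof.
case: c => [a|] /=; last by move=> _; exact: mem_Lwin_None.
rewrite !mem_Lwin_Some => /andP [h1 h2]; apply/andP; split; lia.
Qed.

Lemma shR_resp d (r : Raw) : respF (Lwin (rw r + absz d)) (fun x => rf r (sh d x)).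
Proof.
move=> x y e; apply: rfP => c hc; rewrite /sh; apply: e; exact: shI_Lwin.
Qed.

Definition shR d (r : Raw) : Raw := mkRaw (shR_resp (d := d) (r := r)).

Lemma shR_ae d r r' : eqae r r' -> eqae (shR d r) (shR d r').
Proof. exact: (large_sh HU d). Qed.

Lemma ptw_ae (r r' : Raw) : (forall x, rf r x = rf r' x) -> eqae r r'.
Proof. by move=> h; apply: (large_mono (A := fun _ => True)); [|exact: (large_T HU)]. Qed.

Lemma shR_comp d e r : eqae (shR d (shR e r)) (shR (e + d)%R r).
Proof. by apply: ptw_ae => x; rewrite /shR /mkRaw /rf /= sh_sh. Qed.

Lemma shR0 r : eqae (shR 0%R r) r.
Proof. by apply: ptw_ae => x; rewrite /shR /mkRaw /rf /= sh0. Qed.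

Lemma cl_shR d r : cl (shR d (proj1_sig (cl r))) = cl (shR d r).
Proof. apply/cl_eq; apply: shR_ae; exact: canon_spec. Qed.

Definition afunU (q : Car) : Car := cl (shR 1%R (proj1_sig q)).
Definition ainvU (q : Car) : Car := cl (shR (-1)%R (proj1_sig q)).

Lemma cl_shR2 d e r : cl (shR d (shR e r)) = cl (shR (e + d)%R r).
Proof. apply/cl_eq; exact: shR_comp. Qed.

Lemma afunUK : cancel afunU ainvU.
Proof.
move=> q; rewrite /ainvU /afunU cl_shR cl_shR2 -[RHS]cl_rep.
apply/cl_eq; have -> : (1 + -1 = 0 :> int)%R by []. exact: shR0.
Qed.

Lemma ainvUK : cancel ainvU afunU.
Proof.
move=> q; rewrite /ainvU /afunU cl_shR cl_shR2 -[RHS]cl_rep.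
apply/cl_eq; have -> : (-1 + 1 = 0 :> int)%R by []. exact: shR0.
Qed.

Lemma Ff_afun q : large (fun x => Ff (afunU q) x = Ff q (sh 1%R x)).
Proof. exact: rep_cl. Qed.

Lemma afunU_fn (f : fsym L) (ms : 'I_(fari f) -> Car) :
  afunU (fintU ms) = fintU (afunU \o ms).
Proof.
rewrite /afunU /fintU cl_shR; apply/cl_eq.
apply: (large_mp (large_ord (fun i => Ff_afun (ms i)))) => x hx.
rewrite /rf /=; congr fint; apply: functional_extensionality => i; by rewrite hx.
Qed.

Lemma afunU_rel (r : rsym L) (ms : 'I_(rari r) -> Car) :
  rintU ms <-> rintU (afunU \o ms).
Proof.
rewrite /rintU -(large_shE HU 1%R).
apply: large_iff (large_ord (fun i => Ff_afun (ms i))) _ => x hx.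
have -> // : (fun i => Ff ((afunU \o ms) i) x) = (fun i => Ff (ms i) (sh 1%R x)).
by apply: functional_extensionality => i /=; rewrite hx.
Qed.

Definition sU : aut MU := @Aut L MU afunU ainvU afunUK ainvUK afunU_fn afunU_rel.

Lemma autpow_cl (n : int) r : autpow sU n (cl r) = cl (shR n r).
Proof.
case: n => k.
  elim: k => [|k IH]; first by rewrite /= -[LHS]cl_rep; apply/cl_eq; apply: eqae_sym; apply: (eqae_trans (shR0 r)); apply: eqae_sym; exact: canon_spec.
  have -> : Posz k.+1 = (Posz k + 1)%R by lia.
  rewrite (autpowS sU) IH /= /afunU cl_shR cl_shR2 //.
elim: k => [|k IH].
  have -> : Negz 0 = (0 - 1)%R by lia.
  rewrite (autpowP sU) /= /ainvU.
  rewrite -[cl r]cl_rep cl_shR. apply/cl_eq; apply: shR_ae. apply: canon_spec.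
have -> : Negz k.+1 = (Negz k - 1)%R by lia.
rewrite (autpowP sU) IH /= /ainvU cl_shR cl_shR2 //.
Qed.

Lemma mem2 (c a b : I) : c \in [:: a; b] -> c = a \/ c = b.
Proof. by rewrite !in_cons in_nil orbF => /orP [/eqP ->|/eqP ->]; [left|right]. Qed.

Lemma rg_resp (g : nat -> nat -> M0) (i : int) :
  respF (Lwin (absz i)) (fun x => g (x None) (x (Some i))).
Proof.
move=> x y e; rewrite (e None (mem_Lwin_None _)) (e (Some i)) //.
rewrite mem_Lwin_Some; apply/andP; split; lia.
Qed.

Definition rg (g : nat -> nat -> M0) (i : int) : Raw := mkRaw (rg_resp g (i := i)).

Lemma autpow_rg g (n : int) : autpow sU n (cl (rg g 0%R)) = cl (rg g n).
Proof.
rewrite autpow_cl; apply/cl_eq; apply: ptw_ae => x.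
by rewrite /shR /rg /mkRaw /rf /= /sh /= add0r.
Qed.

Lemma Ff_rg g n : large (fun x => Ff (cl (rg g n)) x = g (x None) (x (Some n))).
Proof. exact: rep_cl. Qed.

Lemma updx_eq (x : I -> nat) c n : updx x c n c = n.
Proof. by rewrite /updx eqxx. Qed.

Lemma updx_neq (x : I -> nat) c n d : d != c -> updx x c n d = x d.
Proof. by rewrite /updx => /negbTE ->. Qed.

Lemma large_lt_None i : large (fun x => (x (Some i) < x None)%N).
Proof.
rewrite (@largeP _ HU [:: Some i; None] _ (absz i)).
- apply: (uS HU) (uT HU) => a _; apply: (uS HU) (unp HU a) => b ab /=.
  by rewrite updx_eq updx_neq // updx_eq.
- by move=> x y e; rewrite (e (Some i)) ?(e None) // !inE eqxx ?orbT.
- by rewrite /= ?andbT.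
- move=> c /mem2 [->|->]; last exact: mem_Lwin_None.
  rewrite mem_Lwin_Some; apply/andP; split; lia.
Qed.

Lemma large_le i j : (i < j)%R -> large (fun x => (x (Some i) <= x (Some j))%N).
Proof.
move=> ij.
rewrite (@largeP _ HU [:: Some i; Some j] _ (maxn (absz i) (absz j))).
- have ne : Some i != Some j by apply/eqP => -[e]; rewrite e ltxx in ij.
  apply: (uS HU) (uT HU) => a _; apply: (uS HU) (unp HU a) => b ab /=.
  rewrite [X in (_ <= X)%N]updx_eq updx_neq // updx_eq; exact: ltnW.
- by move=> x y e; rewrite (e (Some i)) ?(e (Some j)) // !inE eqxx ?orbT.
- by rewrite /= ?andbT.
- move=> c /mem2 [->|->];
  rewrite mem_Lwin_Some; apply/andP; split; lia.
Qed.

Lemma nlarge_le i j : (j < i)%R -> ~ large (fun x => (x (Some i) <= x (Some j))%N).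
Proof.
move=> ij.
rewrite (@largeP _ HU [:: Some j; Some i] _ (maxn (absz i) (absz j))).
- have ne : Some i != Some j by apply/eqP => -[e]; rewrite e ltxx in ij.
  move=> h; apply: (u0 HU); apply: (uS HU) h => a ha.
  apply: (u0 HU); apply: (uS HU) (uI HU ha (unp HU a)) => b [] /=.
  rewrite updx_eq updx_neq 1?eq_sym // updx_eq; lia.
- by move=> x y e; rewrite (e (Some i)) ?(e (Some j)) // !inE eqxx ?orbT.
- by rewrite /= ?andbT.
- move=> c /mem2 [->|->];
  rewrite mem_Lwin_Some; apply/andP; split; lia.
Qed.

Lemma xi_ok (phi : formula L) kx ky (al be : nat -> nat -> nat -> M0) :
  (forall v, ffree phi v -> (v < kx + ky)%N) ->
  (forall N i j, (i < N)%N -> (j < N)%N ->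
     (phi_holds M0 phi kx ky (al N i) (be N j) <-> (i <= j)%N)) ->
  xi sU (inst MU phi kx ky (fun l => cl (rg (fun N m => be N m l) 0%R)))
        (fun l => cl (rg (fun N m => al N m l) 0%R)) = I10.
Proof.
move=> hphi hop; apply: functional_extensionality => n.
apply: propositional_extensionality; rewrite /xi /inst.
have -> : autpow sU n \o (fun l => cl (rg (fun N m => al N m l) 0%R)) =
          (fun l => cl (rg (fun N m => al N m l) n)).
  by apply: functional_extensionality => l /=; rewrite autpow_rg.
rewrite /phi_holds holds_sat // los.
rewrite (@large_sat_ae _ (fun x => env kx (al (x None) (x (Some n))) (be (x None) (x (Some 0%R)))) _ _ hphi).
  2: by move=> j _; rewrite /vx /env; case: ifP => _; exact: Ff_rg.
rewrite (@large_iff (fun x => (x (Some n) < x None)%N /\ (x (Some 0%R) < x None)%N)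
           _ (fun x => (x (Some n) <= x (Some 0%R))%N)).
- rewrite /I10; case: (ltgtP n 0%R) => hn.
  + split => // _; exact: large_le.
  + split => // h; exfalso; exact: (nlarge_le hn h).
  + rewrite hn; split => // _.
    by apply: (large_mono (A := fun _ => True)); [|exact: (large_T HU)].
- exact: (large_and HU (large_lt_None _) (large_lt_None _)).
- move=> x [h1 h2]; rewrite -(holds_sat _ hphi); exact: hop.
Qed.

Definition sI (i : nat -> int) k : seq I := [seq Some (i m) | m <- iota 0 k] ++ [:: None].

Lemma map_sI (x : I -> nat) i k : map x (sI i k) = [seq x (Some (i m)) | m <- iota 0 k] ++ [:: x None].
Proof. by rewrite /sI map_cat -map_comp. Qed.

Lemma nth_sI x i k m : (m < k)%N -> nth 0%N (map x (sI i k)) m = x (Some (i m)).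
Proof.
move=> mk; rewrite map_sI nth_cat size_map size_iota mk (nth_map 0%N) ?size_iota //.
by rewrite nth_iota.
Qed.

Lemma nth_sI_k x i k : nth 0%N (map x (sI i k)) k = x None.
Proof. by rewrite map_sI nth_cat size_map size_iota ltnn subnn. Qed.

Lemma size_sI i k : size (sI i k) = k.+1.
Proof. by rewrite /sI size_cat size_map size_iota addn1. Qed.

Lemma sorted_iota_map (i : nat -> int) a n :
  (forall m, (a <= m)%N -> (m.+1 < a + n)%N -> (i m < i m.+1)%R) ->
  sorted <%R [seq i m | m <- iota a n].
Proof.
elim: n a => [|n IH] a h //=.
case: n IH h => [|n] IH h //=.
rewrite h ?leqnn //; last by rewrite addnS ltnS addnS leq_addr.
have := IH a.+1; rewrite /= => -> // m am mn; apply: h; first exact: ltnW.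
lia.
Qed.

Lemma sorted_sI i k : (forall m, (m.+1 < k)%N -> (i m < i m.+1)%R) -> sorted ltI (sI i k).
Proof.
move=> h; rewrite /sI (_ : [seq Some (i m) | m <- iota 0 k] = map Some (map i (iota 0 k))); last by rewrite -map_comp.
apply: sorted_SomeNone; apply: sorted_iota_map => m _; rewrite add0n; exact: h.
Qed.

Lemma sub_sI i k : {subset sI i k <= Lwin (\max_(m < k) absz (i m))}.
Proof.
move=> c; rewrite mem_cat mem_seq1 => /orP [/mapP [m hm ->]|/eqP ->]; last exact: mem_Lwin_None.
rewrite mem_iota add0n in hm; move: hm => /andP [_ hm].
have := leq_bigmax (F := fun m : 'I_k => absz (i m)) (Ordinal hm).
rewrite mem_Lwin_Some /= => hle; apply/andP; split; lia.
Qed.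

Lemma indisc_side (be : nat -> nat -> nat -> M0) ky psi k (i : nat -> int) :
  (forall v, ffree psi v -> (v < k * ky)%N) ->
  (forall m, (m.+1 < k)%N -> (i m < i m.+1)%R) ->
  let b := fun l => cl (rg (fun N m => be N m l) 0%R) in
  let C := fun l => sat M0 (fun v => be (nth 0%N l k) (nth 0%N l (v %/ ky)) (v %% ky)) psi in
  (holds MU psi (k * ky) (fun v => (autpow sU (i (v %/ ky)) \o b) (v %% ky)) <->
   Q U (sI i k) (fun y => C (map y (sI i k))) x0).
Proof.
move=> hpsi hi b C.
rewrite holds_sat // los.
rewrite (@large_sat_ae _ (fun x v => be (x None) (x (Some (i (v %/ ky)))) (v %% ky)) _ _ hpsi).
  2: by move=> v _; rewrite /vx /= autpow_rg; exact: Ff_rg.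
have key : forall x, sat M0 (fun v => be (x None) (x (Some (i (v %/ ky)))) (v %% ky)) psi <->
                     C (map x (sI i k)).
  move=> x; apply: sat_coinc => v /hpsi hv.
  have hk : (v %/ ky < k)%N.
    have [ky0|kyp] := posnP ky; first by rewrite ky0 muln0 in hv.
    by rewrite ltn_divLR.
  by rewrite nth_sI_k nth_sI.
have E := large_iff (large_T HU) (fun x (_ : True) => key x).
rewrite E (@largeP _ HU (sI i k) (fun x => C (map x (sI i k))) _ _ (sorted_sI hi) (@sub_sI i k)) //.
move=> x y e; suff -> : map x (sI i k) = map y (sI i k) by [].
by apply/eq_in_map => c /e.
Qed.

Lemma indisc_ok (be : nat -> nat -> nat -> M0) ky :
  indiscernible ky (fun n => autpow sU n \o (fun l => cl (rg (fun N m => be N m l) 0%R))).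
Proof.
move=> psi k i j hpsi hi hj.
rewrite (indisc_side _ hpsi hi) (indisc_side _ hpsi hj).
apply: (Q_ren HU (fun l => sat M0 (fun v => be (nth 0%N l k) (nth 0%N l (v %/ ky)) (v %% ky)) psi)); rewrite ?size_sI //;
  apply: (sorted_uniq ltI_trans ltI_irr); exact: sorted_sI.
Qed.

End Ultra.

Lemma hard_core (L : signature) (T : formula L -> Prop) (phi : formula L) (kx ky : nat)
  (U : (nat -> Prop) -> Prop) (HU : UF U) :
  (forall v, ffree phi v -> (v < kx + ky)%N) -> order_property T phi kx ky ->
  exists (M : structure L) (b : nat -> M) (s : aut M) (a : nat -> M),
              models M T /\ inW ky b s /\ xi s (inst M phi kx ky b) a = I10.
Proof.
move=> hphi [M0 [hM hop]].
have H : forall n, {ab : (nat -> nat -> M0) * (nat -> nat -> M0) |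
    forall i j, (i < n)%N -> (j < n)%N ->
      (phi_holds M0 phi kx ky (ab.1 i) (ab.2 j) <-> (i <= j)%N)}.
  move=> n; apply: constructive_indefinite_description.
  by have [a [b h]] := hop n; exists (a, b).
pose al N i := (proj1_sig (H N)).1 i.
pose be N i := (proj1_sig (H N)).2 i.
exists (MU M0 HU), (fun l => cl HU (rg (fun N m => be N m l) 0%R)), (sU M0 HU),
  (fun l => cl HU (rg (fun N m => al N m l) 0%R)).
split; first exact: models_MU.
split; first exact: indisc_ok.
apply: xi_ok => // N i j hi hj; exact: (proj2_sig (H N)).
Qed.

End PartE.
Import PartE.

Lemma hard (L : signature) (T : formula L -> Prop) (phi : formula L) (kx ky : nat) :
  (forall v, ffree phi v -> v < kx + ky) -> order_property T phi kx ky ->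
  exists (M : structure L) (b : nat -> M) (s : aut M) (a : nat -> M),
              models M T /\ inW ky b s /\ xi s (inst M phi kx ky b) a = I10.
Proof. have [U HU] := UF_exists; exact: hard_core HU. Qed.

Theorem proposition4p10 (L : signature) (T : formula L -> Prop)
  (phi : formula L) (kx ky : nat) :
  complete_theory T ->
  (forall v, ffree phi v -> v < kx + ky) ->
  let P1 := order_property T phi kx ky in
  let P2 := exists (M : structure L) (b : nat -> M) (s : aut M) (a : nat -> M),
              models M T /\ xi s (inst M phi kx ky b) a = I10 in
  let P3 := exists (M : structure L) (b : nat -> M) (s : aut M) (a : nat -> M),
              models M T /\ inW ky b s /\ xi s (inst M phi kx ky b) a = I10 in
  let P4 := exists (M : structure L) (b : nat -> M) (s : aut M),
              models M T /\ forall n : nat,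
                exists J, xiM s (inst M phi kx ky b) J /\ contains_block J n in
  let P5 := exists (M : structure L) (s : aut M),
              models M T /\ forall n : nat, exists bn : nat -> M,
                exists J, xiM s (inst M phi kx ky bn) J /\ contains_block J n in
  let P6 := exists (M : structure L) (b : nat -> M) (s : aut M),
              models M T /\ in_closure (xiM s (inst M phi kx ky b)) I10 in
  let P7 := exists M : structure L, models M T /\ rho M phi kx ky I10 in
  (P1 <-> P2) /\ (P1 <-> P3) /\ (P1 <-> P4) /\ (P1 <-> P5) /\
  (P1 <-> P6) /\ (P1 <-> P7).
Proof.
move=> _ hphi P1 P2 P3 P4 P5 P6 P7.
have h13 : P1 -> P3 := hard hphi.
have h32 : P3 -> P2.
  by move=> [M [b [s [a [hM [_ h]]]]]]; exists M, b, s, a.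
have h51 : P5 -> P1.
  move=> [M [s [hM h]]]; exists M; split => // n.
  have [bn [J [[a ->] [k hk]]]] := h n.
  exact: (block_op hphi hk).
have h45 : P4 -> P5.
  by move=> [M [b [s [hM h]]]]; exists M, s; split => // n; exists b.
have h24 : P2 -> P4.
  move=> [M [b [s [a [hM h]]]]]; exists M, b, s; split => // n.
  exists (xi s (inst M phi kx ky b) a); split; first by exists a.
  by exists 0%R => i _; rewrite h add0r.
have h21 : P2 -> P1 by move=> ?; apply/h51/h45/h24.
have h26 : P2 -> P6.
  move=> [M [b [s [a [hM h]]]]]; exists M, b, s; split => // N.
  by exists (xi s (inst M phi kx ky b) a); split; [exists a|rewrite h].
have h61 : P6 -> P1.
  move=> [M [b [s [hM h]]]]; exists M; split => // n.
  have [J [[a ->] hJ]] := h n.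
  apply: (block_op hphi (k := 0%R)) => i hi; rewrite add0r; apply: hJ; lia.
have h27 : P2 <-> P7.
  split.
    by move=> [M [b [s [a [hM h]]]]]; exists M; split => //; exists b, s, a.
  by move=> [M [hM [b [s [a h]]]]]; exists M, b, s, a.
have h12 : P1 -> P2 by move=> /h13 /h32.
split; first by split.
split; first by split => // /h32.
split; first by split => [/h12 /h24 //|/h45 /h51].
split; first by split => [/h12 /h24 /h45 //|/h51].
split; first by split => [/h12 /h26 //|/h61].
by split => [/h12 /h27 //|/h27 /h21].
Qed.
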